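(* Let $I$ be an inverse semigroup [respectively, inverse monoid] generated, as a semigroup [respectively, monoid], by a finite set $\Sigma$. Then the idempotent problem of $I$ with respect to $\Sigma$ is a regular language if and only if $I$ is finite. *)

(* Defs.v *)
From mathcomp Require Import all_boot.
Set Implicit Arguments. Unset Strict Implicit. Unset Printing Implicit Defensive.

Definition is_inverse_semigroup (I : Type) (mul : I -> I -> I) : Prop :=
  (forall x y z, mul x (mul y z) = mul (mul x y) z) /\
  (forall x, exists y, mul (mul x y) x = x /\ mul (mul y x) y = y /\
     forall y', mul (mul x y') x = x -> mul (mul y' x) y' = y' -> y' = y).

Definition is_inverse_monoid (I : Type) (mul : I -> I -> I) (one : I) : Prop :=
  is_inverse_semigroup mul /\ (forall x, mul one x = x /\ mul x one = x).

Definition is_idempotent (I : Type) (mul : I -> I -> I) (x : I) : Prop :=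
  mul x x = x.

Definition eval_sg (I : Type) (mul : I -> I -> I) (S : Type) (gen : S -> I)
  (a : S) (w : seq S) : I :=
  foldl (fun acc b => mul acc (gen b)) (gen a) w.

Definition eval_mon (I : Type) (mul : I -> I -> I) (one : I) (S : Type)
  (gen : S -> I) (w : seq S) : I :=
  foldl (fun acc b => mul acc (gen b)) one w.

Definition generates_semigroup (I : Type) (mul : I -> I -> I) (S : Type)
  (gen : S -> I) : Prop :=
  forall x : I, exists (a : S) (w : seq S), eval_sg mul gen a w = x.

Definition generates_monoid (I : Type) (mul : I -> I -> I) (one : I) (S : Type)
  (gen : S -> I) : Prop :=
  forall x : I, exists w : seq S, eval_mon mul one gen w = x.

Definition idem_problem_sg (I : Type) (mul : I -> I -> I) (S : Type)
  (gen : S -> I) (w : seq S) : Prop :=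
  match w with
  | [::] => False
  | a :: w' => is_idempotent mul (eval_sg mul gen a w')
  end.

Definition idem_problem_mon (I : Type) (mul : I -> I -> I) (one : I) (S : Type)
  (gen : S -> I) (w : seq S) : Prop :=
  is_idempotent mul (eval_mon mul one gen w).

Definition regular (S : finType) (L : seq S -> Prop) : Prop :=
  exists (Q : finType) (q0 : Q) (delta : Q -> S -> Q) (F : pred Q),
    forall w : seq S, L w <-> F (foldl delta q0 w).

Fixpoint has_elem (I : Type) (x : I) (s : seq I) : Prop :=
  match s with [::] => False | y :: s' => y = x \/ has_elem x s' end.

Definition finite_carrier (I : Type) : Prop :=
  exists s : seq I, forall x : I, has_elem x s.

(* Main.v *)
Require Import Defs.
From mathcomp Require Import all_boot.
From Stdlib Require Import ClassicalEpsilon.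
Set Implicit Arguments. Unset Strict Implicit. Unset Printing Implicit Defensive.

Section IS.
Variables (I : Type) (mul : I -> I -> I).
Hypothesis H : is_inverse_semigroup mul.
Local Notation "x ** y" := (mul x y) (at level 40, left associativity).

Lemma mulA x y z : x ** (y ** z) = x ** y ** z.
Proof. exact: (proj1 H). Qed.

Definition inv x : I := proj1_sig (constructive_indefinite_description _ ((proj2 H) x)).

Lemma invP x : x ** inv x ** x = x /\ inv x ** x ** inv x = inv x /\
   forall y', x ** y' ** x = x -> y' ** x ** y' = y' -> y' = inv x.
Proof. rewrite /inv; case: constructive_indefinite_description => y /= Hy; exact Hy. Qed.

Lemma inv1 x : x ** inv x ** x = x. Proof. by case: (invP x). Qed.
Lemma inv2 x : inv x ** x ** inv x = inv x. Proof. by case: (invP x) => _ []. Qed.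
Lemma inv_uniq x y : x ** y ** x = x -> y ** x ** y = y -> y = inv x.
Proof. by case: (invP x) => _ [] _; apply. Qed.

Lemma inv1r a x : a ** x ** inv x ** x = a ** x.
Proof. by rewrite -!mulA (mulA x (inv x) x) inv1. Qed.
Lemma inv2r a x : a ** inv x ** x ** inv x = a ** inv x.
Proof. by rewrite -!mulA (mulA (inv x) x (inv x)) inv2. Qed.

Lemma invK x : inv (inv x) = x.
Proof. by symmetry; apply: inv_uniq; [apply: inv2 | apply: inv1]. Qed.

Definition idem e := e ** e = e.

Lemma idemr a e : idem e -> a ** e ** e = a ** e.
Proof. by move=> He; rewrite -mulA He. Qed.

Lemma inv_idem e : idem e -> inv e = e.
Proof. by move=> He; symmetry; apply: inv_uniq; rewrite /idem in He; rewrite !He. Qed.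

Lemma idem_mul e f : idem e -> idem f -> idem (e ** f).
Proof.
move=> He Hf; set x := e ** f; set y := inv x.
have Hy : f ** y ** e = y.
  apply: inv_uniq.
  - rewrite /x !mulA !(idemr _ Hf) !(idemr _ He).
    have := inv1 (e ** f); rewrite -/y !mulA //.
  - rewrite /x !mulA !(idemr _ Hf) !(idemr _ He).
    have := inv2 (e ** f); rewrite -/y !mulA => Hyy.
    have -> : f ** y ** e ** f ** y ** e = f ** (y ** e ** f ** y) ** e by rewrite !mulA.
    by rewrite Hyy.
have Hyy : idem y.
  rewrite /idem; have -> : y ** y = (f ** y ** e) ** (f ** y ** e) by rewrite Hy.
  have -> : f ** y ** e ** (f ** y ** e) = f ** (y ** x ** y) ** e by rewrite /x !mulA.
  by rewrite inv2.
have : x = inv y by apply: inv_uniq; [apply: inv2 | apply: inv1].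
by rewrite inv_idem // => ->.
Qed.

Lemma idem_comm e f : idem e -> idem f -> e ** f = f ** e.
Proof.
move=> He Hf.
have Hef := idem_mul He Hf; have Hfe := idem_mul Hf He.
rewrite -(inv_idem Hef); symmetry; apply: inv_uniq.
- rewrite !mulA !(idemr _ Hf) !(idemr _ He).
  by have := Hef; rewrite /idem !mulA.
- rewrite !mulA !(idemr _ Hf) !(idemr _ He).
  by have := Hfe; rewrite /idem !mulA.
Qed.

Lemma idem_xinv x : idem (x ** inv x). Proof. by rewrite /idem mulA inv1. Qed.
Lemma idem_invx x : idem (inv x ** x). Proof. by rewrite /idem mulA inv2. Qed.

Lemma inv_mul x y : inv (x ** y) = inv y ** inv x.
Proof.
symmetry; apply: inv_uniq.
- have -> : x ** y ** (inv y ** inv x) ** (x ** y) = x ** ((y ** inv y) ** (inv x ** x)) ** y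
    by rewrite !mulA.
  rewrite (idem_comm (idem_xinv y) (idem_invx x)).
  by rewrite !mulA inv1 inv1r.
- have -> : inv y ** inv x ** (x ** y) ** (inv y ** inv x) =
     inv y ** ((inv x ** x) ** (y ** inv y)) ** inv x by rewrite !mulA.
  rewrite (idem_comm (idem_invx x) (idem_xinv y)).
  by rewrite !mulA inv2 inv2r.
Qed.


Definition le a b := a ** b = a.
Lemma le_trans a b c : le a b -> le b c -> le a c.
Proof. by rewrite /le => Hab Hbc; rewrite -Hab -mulA Hbc. Qed.

Definition ee x := x ** inv x.

Lemma le_mul_e y g : le (ee (y ** g)) (ee y).
Proof. by rewrite /le /ee inv_mul !mulA inv2r. Qed.

Definition compat x y := idem (inv x ** y) /\ idem (inv y ** x) /\
  idem (x ** inv y) /\ idem (y ** inv x).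

Lemma compat_sym x y : compat x y -> compat y x.
Proof. by case=> [a [b [c d]]]; split=> //; split=> //; split. Qed.

Lemma compat_Ee x y : compat x y -> inv x ** y = inv y ** x.
Proof. by case=> Hi _; rewrite -{1}(inv_idem Hi) inv_mul invK. Qed.

Lemma compat_Ef x y : compat x y -> x ** inv y = y ** inv x.
Proof. by case=> _ [_ [Hi _]]; rewrite -{1}(inv_idem Hi) inv_mul invK. Qed.

Lemma compat_h x y : compat x y -> x ** inv x ** (y ** inv y) = x ** inv y.
Proof.
move=> Hc; have [He _] := Hc.
have H1 : x ** inv x ** (y ** inv y) ** (x ** inv x) = x ** inv x ** (y ** inv y).
  by rewrite -mulA (idem_comm (idem_xinv y) (idem_xinv x)) mulA (idem_xinv x).
rewrite -H1.
have -> : x ** inv x ** (y ** inv y) ** (x ** inv x) =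
   x ** ((inv x ** y) ** (inv y ** x)) ** inv x by rewrite !mulA.
rewrite -(compat_Ee Hc) He.
have -> : x ** (inv x ** y) ** inv x = x ** inv x ** (y ** inv x) by rewrite !mulA.
by rewrite -(compat_Ef Hc) !mulA inv1.
Qed.

Lemma compat_meet x y : compat x y -> x ** inv x ** y = y ** inv y ** x.
Proof.
move=> Hc.
have E1 : x ** inv x ** y = x ** inv y ** x.
  by rewrite -mulA (compat_Ee Hc) !mulA.
have E2 : y ** inv y ** x = x ** inv x ** (y ** inv y) ** x.
  by rewrite (idem_comm (idem_xinv x) (idem_xinv y)) -(mulA (y ** inv y)) inv1.
by rewrite E1 E2 (compat_h Hc).
Qed.

Lemma compat_eq x y : compat x y -> ee x = ee y -> x = y.
Proof.
move=> Hc He; have := compat_meet Hc; rewrite /ee in He.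
by rewrite He inv1 -He inv1 => ->.
Qed.

Lemma idem_conj x g : idem g -> idem (x ** g ** inv x).
Proof.
move=> Hg; rewrite /idem.
have -> : x ** g ** inv x ** (x ** g ** inv x) = x ** (g ** (inv x ** x)) ** g ** inv x
  by rewrite !mulA.
rewrite (idem_comm Hg (idem_invx x)) !mulA inv1.
by rewrite (idemr _ Hg).
Qed.


Lemma conj_key f x y g : idem f -> idem g -> f ** x = f ** y -> inv x ** f = inv y ** f ->
  f ** (x ** g ** inv x) = f ** (y ** g ** inv y).
Proof.
move=> Hf Hg E1 E2.
have A z : idem z -> f ** z = f ** z ** f.
  by move=> Hz; rewrite -(mulA f z f) (idem_comm Hz Hf) mulA Hf.
rewrite (A _ (idem_conj x Hg)) (A _ (idem_conj y Hg)).
have -> : f ** (x ** g ** inv x) ** f = f ** x ** g ** (inv x ** f) by rewrite !mulA.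
by rewrite E1 E2 !mulA.
Qed.

Lemma le_conj x y ev g : compat x y -> idem ev -> idem g ->
  le ev (ee x) -> le ev (y ** g ** inv y) -> le ev (x ** g ** inv x).
Proof.
rewrite /le /ee => Hc Hev Hg Hx Hy.
set f := x ** inv y.
have Hf : idem f by case: Hc => _ [_ [? _]].
have Hyy : ev ** (y ** inv y) = ev.
  rewrite -{1}Hy.
  have -> : ev ** (y ** g ** inv y) ** (y ** inv y) = ev ** (y ** g) ** (inv y ** y ** inv y)
    by rewrite !mulA.
  by rewrite inv2 -mulA.
have Hevf : ev ** f = ev by rewrite /f -(compat_h Hc) mulA Hx Hyy.
have Efxy : f ** x = f ** y.
  have E1 : x ** inv x ** y = f ** x by rewrite /f -mulA (compat_Ee Hc) !mulA.
  have E2 : y ** inv y ** x = f ** y by rewrite /f (compat_Ef Hc) -mulA -(compat_Ee Hc) !mulA.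
  by rewrite -E1 -E2 (compat_meet Hc).
have Eixy : inv x ** f = inv y ** f.
  by have := congr1 inv Efxy; rewrite (inv_mul f x) (inv_mul f y) (inv_idem Hf).
have Key := conj_key Hf Hg Efxy Eixy.
by rewrite -Hevf -mulA Key mulA Hevf.
Qed.

End IS.
Section Words.
Variables (I : Type) (mul : I -> I -> I).
Hypothesis H : is_inverse_semigroup mul.
Local Notation "x ** y" := (mul x y) (at level 40, left associativity).
Variables (S : eqType) (gen : S -> I).

Definition val (x0 : I) (w : seq S) := foldl (fun acc b => acc ** gen b) x0 w.

Lemma val_cat x0 p q : val x0 (p ++ q) = val (val x0 p) q.
Proof. by rewrite /val foldl_cat. Qed.
Lemma val_rcons x0 p b : val x0 (rcons p b) = val x0 p ** gen b.
Proof. by rewrite /val foldl_rcons. Qed.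
Lemma val_mull z x0 p : val (z ** x0) p = z ** val x0 p.
Proof.
elim: p x0 => [|b p IH] x0 //=.
by rewrite -(mulA H) IH.
Qed.

Lemma le_val z s : le mul (ee H (val z s)) (ee H z).
Proof.
elim/last_ind: s => [|s b IH].
  by rewrite /le /= (idem_xinv H).
apply: (le_trans H _ IH); rewrite val_rcons; exact: le_mul_e.
Qed.

Variables (K : eqType) (key : seq S -> K) (x0 : I).

Fixpoint trans_aux (p : seq S) (w : seq S) : seq (K * S) :=
  match w with
  | [::] => [::]
  | b :: w' => (key p, b) :: trans_aux (rcons p b) w'
  end.

Lemma trans_in p q b s : (key (p ++ q), b) \in trans_aux p (q ++ b :: s).
Proof.
elim: q p => [|c q IH] p /=; first by rewrite cats0 mem_head.
by rewrite inE -cat_rcons IH orbT.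
Qed.

Lemma trans_out p w t b : (t, b) \in trans_aux p w ->
  exists q s, w = q ++ b :: s /\ t = key (p ++ q).
Proof.
elim: w p => [|c w IH] p //=; rewrite inE => /orP [/eqP [-> ->]|].
  by exists [::], w; rewrite cats0.
move=> /IH [q [s [-> ->]]]; exists (c :: q), s; split=> //.
by rewrite cat_rcons.
Qed.

Hypothesis Hk : forall p p', key p = key p' -> compat H (val x0 p) (val x0 p').

Lemma core_le w w' : {subset trans_aux [::] w <= trans_aux [::] w'} ->
  le mul (ee H (val x0 w')) (ee H (val x0 w)).
Proof.
move=> Hsub.
suff : forall p s, w = p ++ s -> le mul (ee H (val x0 w')) (ee H (val x0 p)).
  by move/(_ w [::]); rewrite cats0; apply.
elim/last_ind => [|p b IH] s Hw.
  exact: le_val.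
have Hin : (key p, b) \in trans_aux [::] w.
  by rewrite Hw cat_rcons -[p]cat0s trans_in.
have [q [s' [Hw' Hkey]]] := trans_out (Hsub _ Hin).
have Hc := Hk Hkey.
have IH' := IH (b :: s) (etrans Hw (cat_rcons b p s)).
rewrite /= in Hc.
have E z : ee H (z ** gen b) = z ** (gen b ** inv H (gen b)) ** inv H z.
  by rewrite /ee (inv_mul H) !(mulA H).
rewrite val_rcons E.
apply: (le_conj Hc).
- exact: idem_xinv.
- exact: idem_xinv.
- exact: IH'.
- have := le_val (val x0 (rcons q b)) s'.
  by rewrite -val_cat cat_rcons -Hw' val_rcons E.
Qed.

Lemma core_eq w w' : key w = key w' ->
  trans_aux [::] w =i trans_aux [::] w' -> val x0 w = val x0 w'.
Proof.
move=> Hkw Ht.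
apply: (compat_eq (Hk Hkw)).
have A : le mul (ee H (val x0 w')) (ee H (val x0 w)).
  by apply: core_le => z; rewrite Ht.
have B : le mul (ee H (val x0 w)) (ee H (val x0 w')).
  by apply: core_le => z; rewrite Ht.
rewrite /le in A B.
by rewrite -B (idem_comm H (idem_xinv H _) (idem_xinv H _)) A.
Qed.

End Words.

Lemma has_elem_cat_l (I : Type) (x : I) s1 s2 : has_elem x s1 -> has_elem x (s1 ++ s2).
Proof. elim: s1 => [|y s IH] //= [->|/IH]; by [left|right]. Qed.
Lemma has_elem_cat_r (I : Type) (x : I) s1 s2 : has_elem x s2 -> has_elem x (s1 ++ s2).
Proof. elim: s1 => [|y s IH] //= /IH; by right. Qed.

Lemma has_elem_flatten (I : Type) (D : eqType) (f : D -> seq I) (s : seq D) d x :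
  d \in s -> has_elem x (f d) -> has_elem x (flatten (map f s)).
Proof.
elim: s => [|e s IH] //=; rewrite inE => /orP [/eqP <- Hx|Hd Hx].
  exact: has_elem_cat_l.
apply: has_elem_cat_r; exact: IH.
Qed.

Lemma finite_of_data (I : Type) (D : finType) (R : D -> I -> Prop) :
  (forall x, exists d, R d x) -> (forall d x y, R d x -> R d y -> x = y) ->
  finite_carrier I.
Proof.
move=> Hex Hinj.
pose pickR (d : D) : seq I :=
  match excluded_middle_informative (exists x, R d x) with
  | left Hx => [:: proj1_sig (constructive_indefinite_description _ Hx)]
  | right _ => [::] end.
exists (flatten (map pickR (enum D))) => x.
have [d Hd] := Hex x.
apply: (@has_elem_flatten _ _ pickR _ d); first by rewrite mem_enum.
rewrite /pickR; case: excluded_middle_informative => [Hx|Hn]; last first.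
  by exfalso; apply: Hn; exists x.
case: constructive_indefinite_description => y /= Hy; left; exact: Hinj Hy Hd.
Qed.

Lemma has_elem_nth (I : Type) (x : I) s : has_elem x s ->
  exists i : 'I_(size s), tnth (in_tuple s) i = x.
Proof.
move=> Hx.
have : exists i, i < size s /\ nth x s i = x.
  elim: s Hx => [|y s IH] //= [->|/IH [i [Hi Hn]]]; first by exists 0.
  by exists i.+1.
case=> i [Hi Hn]; exists (Ordinal Hi); by rewrite (tnth_nth x).
Qed.

Definition dec (P : Prop) : bool := if excluded_middle_informative P then true else false.
Lemma decP (P : Prop) : dec P <-> P.
Proof. by rewrite /dec; case: excluded_middle_informative. Qed.

Section DFA.
Variables (S : finType) (Q : finType) (delta : Q -> S -> Q).
Definition Tf (w : seq S) : {ffun Q -> Q} := [ffun q => foldl delta q w].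
Lemma ctx_eq (u v l r : seq S) q0 : Tf u = Tf v ->
  foldl delta q0 (l ++ u ++ r) = foldl delta q0 (l ++ v ++ r).
Proof.
move=> E; rewrite !foldl_cat.
have := congr1 (fun f : {ffun Q -> Q} => f (foldl delta q0 l)) E.
by rewrite !ffunE => ->.
Qed.
End DFA.

Lemma val_cons_cat (I : Type) (mul : I -> I -> I) (H : is_inverse_semigroup mul)
  (S : eqType) (gen : S -> I) x0 p b q :
  val mul gen x0 (p ++ b :: q) = mul (val mul gen x0 p) (val mul gen (gen b) q).
Proof. by rewrite val_cat /= val_mull. Qed.

Lemma eval_sgE (I : Type) (mul : I -> I -> I) (S : eqType) (gen : S -> I) a w :
  eval_sg mul gen a w = val mul gen (gen a) w.
Proof. by []. Qed.

Section SG.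
Variables (I : Type) (mul : I -> I -> I) (S : finType) (gen : S -> I).
Hypothesis H : is_inverse_semigroup mul.
Hypothesis Hg : generates_semigroup mul gen.
Local Notation "x ** y" := (mul x y) (at level 40, left associativity).
Variables (Q : finType) (q0 : Q) (delta : Q -> S -> Q) (F : pred Q).
Hypothesis Hreg : forall w, idem_problem_sg mul gen w <-> F (foldl delta q0 w).

Lemma sg_ctx u v l r : Tf delta u = Tf delta v ->
  idem_problem_sg mul gen (l ++ u ++ r) -> idem_problem_sg mul gen (l ++ v ++ r).
Proof. by move=> E /Hreg; rewrite (ctx_eq _ _ _ E) => /Hreg. Qed.

Lemma sg_half a p b p' : Tf delta (a :: p) = Tf delta (b :: p') ->
  idem mul (inv H (val mul gen (gen a) p) ** val mul gen (gen b) p') /\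
  idem mul (val mul gen (gen b) p' ** inv H (val mul gen (gen a) p)).
Proof.
move=> E; set x := val mul gen (gen a) p; set y := val mul gen (gen b) p'.
have [c [r Hcr]] := Hg (inv H x); rewrite eval_sgE in Hcr.
split.
- have := @sg_ctx _ _ (c :: r) [::] E.
  rewrite /= !cats0 /is_idempotent !eval_sgE !val_cons_cat // Hcr -/x -/y; apply.
  exact: idem_invx.
- have := @sg_ctx _ _ [::] (c :: r) E.
  rewrite /= /is_idempotent !eval_sgE !val_cons_cat // Hcr -/x -/y; apply.
  exact: idem_xinv.
Qed.

Lemma sg_compat a p b p' : Tf delta (a :: p) = Tf delta (b :: p') ->
  compat H (val mul gen (gen a) p) (val mul gen (gen b) p').
Proof.
move=> E; have [A B] := sg_half E; have [C D] := sg_half (esym E).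
by split=> //; split=> //; split.
Qed.

Lemma sg_finite : finite_carrier I.
Proof.
pose D : finType := (S * {ffun Q -> Q} * {set {ffun Q -> Q} * S})%type.
pose R (d : D) (x : I) := exists a w,
  d = (a, Tf delta (a :: w), [set z in trans_aux (fun p => Tf delta (a :: p)) [::] w]) /\
  eval_sg mul gen a w = x.
apply: (@finite_of_data _ D R).
  move=> x; have [a [w Hw]] := Hg x.
  by eexists; exists a, w; split; first reflexivity.
move=> d x y [a [w [-> <-]]] [a' [w' [E <-]]].
case: E => Ea; subst a' => Et Es.
rewrite !eval_sgE.
apply: (core_eq (key := fun p => Tf delta (a :: p))).
- by move=> q q' Eq; apply: sg_compat.
- exact: Et.
- move=> z; move/setP: Es => /(_ z); by rewrite !inE.
Qed.
End SG.

Lemma code_ex (I : Type) (s : seq I) : finite_carrier I -> (forall x, has_elem x s) ->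
  { code : I -> 'I_(size s) | forall x, tnth (in_tuple s) (code x) = x }.
Proof.
move=> _ Hs.
have Hx : forall x, exists i : 'I_(size s), tnth (in_tuple s) i = x.
  by move=> x; apply: has_elem_nth.
exists (fun x => proj1_sig (constructive_indefinite_description _ (Hx x))).
by move=> x; case: constructive_indefinite_description.
Qed.

Lemma sg_regular (I : Type) (mul : I -> I -> I) (S : finType) (gen : S -> I) :
  finite_carrier I -> regular (idem_problem_sg mul gen).
Proof.
move=> Hf; have [s Hs] := Hf.
have [code Hcode] := code_ex Hf Hs.
pose elt := tnth (in_tuple s).
pose delta (st : option 'I_(size s)) (b : S) : option 'I_(size s) :=
  Some (code (match st with None => gen b | Some i => mul (elt i) (gen b) end)).
pose F (st : option 'I_(size s)) : bool :=
  match st with None => false | Some i => dec (is_idempotent mul (elt i)) end.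
exists (option 'I_(size s) : finType), None, delta, F.
have Inv : forall w i, exists j, foldl delta (Some i) w = Some j /\
    elt j = val mul gen (elt i) w.
  elim=> [|b w IH] i /=; first by exists i.
  have [j [-> Ej]] := IH (code (mul (elt i) (gen b))).
  by exists j; split=> //; rewrite Ej /elt Hcode.
case=> [|a w] /=; first by split.
have [j [-> Ej]] := Inv w (code (gen a)).
rewrite /F decP Ej /elt Hcode.
by [].
Qed.

Lemma val_mon_cat (I : Type) (mul : I -> I -> I) (one : I) (H : is_inverse_monoid mul one)
  (S : eqType) (gen : S -> I) p q :
  val mul gen one (p ++ q) = mul (val mul gen one p) (val mul gen one q).
Proof.
rewrite val_cat -{1}[val mul gen one p](proj2 (proj2 H _)).
exact: (val_mull (proj1 H)).
Qed.

Lemma eval_monE (I : Type) (mul : I -> I -> I) one (S : eqType) (gen : S -> I) w :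
  eval_mon mul one gen w = val mul gen one w.
Proof. by []. Qed.

Section MON.
Variables (I : Type) (mul : I -> I -> I) (one : I) (S : finType) (gen : S -> I).
Hypothesis Hm : is_inverse_monoid mul one.
Let H := proj1 Hm.
Hypothesis Hg : generates_monoid mul one gen.
Local Notation "x ** y" := (mul x y) (at level 40, left associativity).
Variables (Q : finType) (q0 : Q) (delta : Q -> S -> Q) (F : pred Q).
Hypothesis Hreg : forall w, idem_problem_mon mul one gen w <-> F (foldl delta q0 w).

Lemma mon_ctx u v l r : Tf delta u = Tf delta v ->
  idem_problem_mon mul one gen (l ++ u ++ r) -> idem_problem_mon mul one gen (l ++ v ++ r).
Proof. by move=> E /Hreg; rewrite (ctx_eq _ _ _ E) => /Hreg. Qed.

Lemma mon_half p p' : Tf delta p = Tf delta p' ->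
  idem mul (inv H (val mul gen one p) ** val mul gen one p') /\
  idem mul (val mul gen one p' ** inv H (val mul gen one p)).
Proof.
move=> E; set x := val mul gen one p; set y := val mul gen one p'.
have [r Hr] := Hg (inv H x); rewrite eval_monE in Hr.
split.
- have := @mon_ctx _ _ r [::] E.
  rewrite /idem_problem_mon /is_idempotent !cats0 !eval_monE !(val_mon_cat Hm) Hr -/x -/y; apply.
  exact: idem_invx.
- have := @mon_ctx _ _ [::] r E.
  rewrite /idem_problem_mon /is_idempotent !cat0s !eval_monE !(val_mon_cat Hm) Hr -/x -/y; apply.
  exact: idem_xinv.
Qed.

Lemma mon_compat p p' : Tf delta p = Tf delta p' ->
  compat H (val mul gen one p) (val mul gen one p').
Proof.
move=> E; have [A B] := mon_half E; have [C D] := mon_half (esym E).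
by split=> //; split=> //; split.
Qed.

Lemma mon_finite : finite_carrier I.
Proof.
pose D : finType := ({ffun Q -> Q} * {set {ffun Q -> Q} * S})%type.
pose R (d : D) (x : I) := exists w,
  d = (Tf delta w, [set z in trans_aux (Tf delta) [::] w]) /\
  eval_mon mul one gen w = x.
apply: (@finite_of_data _ D R).
  move=> x; have [w Hw] := Hg x.
  by eexists; exists w; split; first reflexivity.
move=> d x y [w [-> <-]] [w' [E <-]].
case: E => Et Es.
rewrite !eval_monE.
apply: (core_eq (key := Tf delta)).
- by move=> q q' Eq; apply: mon_compat.
- exact: Et.
- move=> z; move/setP: Es => /(_ z); by rewrite !inE.
Qed.
End MON.

Lemma mon_regular (I : Type) (mul : I -> I -> I) one (S : finType) (gen : S -> I) :
  finite_carrier I -> regular (idem_problem_mon mul one gen).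
Proof.
move=> Hf; have [s Hs] := Hf.
have [code Hcode] := code_ex Hf Hs.
pose elt := tnth (in_tuple s).
pose delta (i : 'I_(size s)) (b : S) : 'I_(size s) := code (mul (elt i) (gen b)).
pose F (i : 'I_(size s)) : bool := dec (is_idempotent mul (elt i)).
exists ('I_(size s) : finType), (code one), delta, F.
have Inv : forall w i, elt (foldl delta i w) = val mul gen (elt i) w.
  elim=> [|b w IH] i //=.
  by rewrite IH /elt Hcode.
move=> w; rewrite /idem_problem_mon /F decP Inv /elt Hcode.
by [].
Qed.

Theorem mainTheorem1 :
  (forall (I : Type) (mul : I -> I -> I) (S : finType) (gen : S -> I),
     is_inverse_semigroup mul -> generates_semigroup mul gen ->
     (regular (idem_problem_sg mul gen) <-> finite_carrier I)) /\
  (forall (I : Type) (mul : I -> I -> I) (one : I) (S : finType) (gen : S -> I),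
     is_inverse_monoid mul one -> generates_monoid mul one gen ->
     (regular (idem_problem_mon mul one gen) <-> finite_carrier I)).
Proof.
split.
- move=> I mul S gen H Hg; split; last exact: sg_regular.
  case=> Q [q0 [delta [F Hreg]]]; exact: (sg_finite H Hg Hreg).
- move=> I mul one S gen Hm Hg; split; last exact: mon_regular.
  case=> Q [q0 [delta [F Hreg]]]; exact: (mon_finite Hm Hg Hreg).
Qed.
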